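(* Let $\mathbf v\in\mathbb R^{n\times m}_{<0}$ with $n\ge2$. For each pair $\{i,i'\}$ of distinct agents let $\mathbf v^{\{i,i'\}}$ be the $2\times m$ matrix consisting of rows $i$ and $i'$ of $\mathbf v$. Let $\mathcal G(\mathbf v)$ be the set of all bipartite graphs $G$ on $([n],[m])$ obtained as follows: choose for every pair $\{i,i'\}$ a graph $G^{\{i,i'\}}\in\mathrm{MWW}(\mathbf v^{\{i,i'\}})$ (on agents $\{i,i'\}$ and chores $[m]$), and put an edge $(i,j)$ in $G$ iff $(i,j)$ is an edge of $G^{\{i,i'\}}$ for every $i'\ne i$. Then $|\mathcal G(\mathbf v)|\le(2m+1)^{n(n-1)/2}$ and $\mathrm{MWW}(\mathbf v)\subseteq\mathcal G(\mathbf v)$.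
   Context: For a matrix $\mathbf w\in\mathbb R^{k\times m}_{<0}$ with rows indexed by an agent set $A$ and $\tau\in\mathbb R^A_{>0}$, $G_\tau(\mathbf w)$ is the bipartite graph on $(A,[m])$ with edge $(i,j)$ iff $\tau_i|w_{i,j}|\le\tau_{i'}|w_{i',j}|$ for all $i'\in A$; $\mathrm{MWW}(\mathbf w)=\{G_\tau(\mathbf w):\tau\in\mathbb R^A_{>0}\}$. *)

(* Defs.v *)
From HB Require Import structures.
From mathcomp Require Import all_boot all_order all_algebra.
From Stdlib Require Import ClassicalEpsilon.
Set Implicit Arguments. Unset Strict Implicit. Unset Printing Implicit Defensive.
Import Order.TTheory GRing.Theory Num.Theory.
Local Open Scope ring_scope.

Definition asbool (P : Prop) : bool :=
  if excluded_middle_informative P then true else false.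

Notation bgraph n m := {set 'I_n * 'I_m}.

(* G_tau(w) for the submatrix w of v consisting of the rows in the agent set A:
   edge (i,j) (with i in A) iff tau_i |v_ij| <= tau_i' |v_i'j| for all i' in A. *)
Definition Gtau (R : realFieldType) (n m : nat) (A : {set 'I_n})
  (v : 'M[R]_(n, m)) (tau : 'I_n -> R) : bgraph n m :=
  [set e | (e.1 \in A) &&
     [forall i' in A, tau e.1 * `|v e.1 e.2| <= tau i' * `|v i' e.2|]].

Definition isMWW (R : realFieldType) (n m : nat) (A : {set 'I_n})
  (v : 'M[R]_(n, m)) (G : bgraph n m) : Prop :=
  exists tau : 'I_n -> R, (forall i, i \in A -> 0 < tau i) /\ G = Gtau A v tau.

Definition MWW (R : realFieldType) (n m : nat) (A : {set 'I_n})
  (v : 'M[R]_(n, m)) : {set bgraph n m} :=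
  [set G | asbool (isMWW A v G)].

(* G is in script-G(v): a choice C of a graph C{i,i'} in MWW(v^{i,i'}) for every
   unordered pair {i,i'} (C symmetric), with (i,j) in G iff (i,j) in C{i,i'}
   for every i' <> i. *)
Definition inGv (R : realFieldType) (n m : nat) (v : 'M[R]_(n, m))
  (G : bgraph n m) : Prop :=
  exists C : 'I_n -> 'I_n -> bgraph n m,
    (forall i i', C i i' = C i' i) /\
    (forall i i', i != i' -> C i i' \in MWW [set i; i'] v) /\
    G = [set e | [forall i' : 'I_n, (i' != e.1) ==> (e \in C e.1 i')]].

Definition Gv (R : realFieldType) (n m : nat) (v : 'M[R]_(n, m))
  : {set bgraph n m} := [set G | asbool (inGv v G)].

(* Main.v *)
Require Import Defs.
From HB Require Import structures.
From mathcomp Require Import all_boot all_order all_algebra.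
From mathcomp Require Import zify.
From Stdlib Require Import ClassicalEpsilon.
Import Order.TTheory GRing.Theory Num.Theory.
Local Open Scope ring_scope.

Lemma asboolE (P : Prop) : asbool P = true <-> P.
Proof. by rewrite /asbool; case: excluded_middle_informative. Qed.

Lemma inMWW (R : realFieldType) (n m : nat) (A : {set 'I_n}) (v : 'M[R]_(n, m)) G :
  G \in MWW A v <-> isMWW A v G.
Proof. by rewrite inE; exact: asboolE. Qed.

Lemma inGvE (R : realFieldType) (n m : nat) (v : 'M[R]_(n, m)) G :
  G \in Gv v <-> inGv v G.
Proof. by rewrite inE; exact: asboolE. Qed.

Lemma forall_set2 (T : finType) (x y : T) (P : pred T) :
  [forall k in [set x; y], P k] = P x && P y.
Proof.
apply/forallP/andP => [H|[Hx Hy] k].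
  split; [move/implyP: (H x); apply; rewrite !inE eqxx //
         |move/implyP: (H y); apply; rewrite !inE eqxx orbT //].
by rewrite !inE; apply/implyP => /orP[/eqP->|/eqP->].
Qed.

Lemma MWW_sub (R : realFieldType) (n m : nat) (v : 'M[R]_(n, m)) :
  MWW [set: 'I_n] v \subset Gv v.
Proof.
apply/subsetP => G /inMWW [tau [tpos ->]]; apply/inGvE.
exists (fun i i' => Gtau [set i; i'] v tau); split; first by move=> i i'; rewrite setUC.
split.
  by move=> i i' _; apply/inMWW; exists tau; split=> // k _; exact: tpos.
apply/setP => e; rewrite !inE /=.
apply/forallP/forallP => H k.
  apply/implyP => _; rewrite inE forall_set2 set21 lexx /=.
  by move/implyP: (H k); apply; rewrite in_setT.
apply/implyP => _; case: (eqVneq k e.1) => [->|ne]; first exact: lexx.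
move/implyP: (H k) => /(_ ne); rewrite inE forall_set2 => /andP[_ /andP[_ ->]].
done.
Qed.

Lemma le_div (R : realFieldType) (x y b d : R) : 0 < b -> 0 < d ->
  (x / b <= y / d) = (x * d <= y * b).
Proof.
move=> hb hd; rewrite ler_pdivlMr // mulrAC ler_pdivrMr //.
Qed.

Lemma sum_sub (T : finType) (X1 Y1 X2 Y2 : {set T}) :
  X1 \subset X2 -> Y1 \subset Y2 -> (#|X1| + #|Y1| = #|X2| + #|Y2|)%N ->
  X1 = X2 /\ Y1 = Y2.
Proof.
move=> sX sY e.
have c1 := subset_leq_card sX; have c2 := subset_leq_card sY.
have e1 : #|X1| = #|X2| by lia.
have e2 : #|Y1| = #|Y2| by lia.
by split; apply/eqP; rewrite eqEcard ?sX ?sY ?e1 ?e2 leqnn.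
Qed.

Lemma card_MWW2 (R : realFieldType) (n m : nat) (v : 'M[R]_(n, m))
  (hneg : forall i j, v i j < 0) (i i' : 'I_n) : i != i' ->
  (#|MWW [set i; i'] v| <= (2 * m).+1)%N.
Proof.
move=> ii'.
pose a := fun j => `|v i' j| / `|v i j|.
pose X := fun G : bgraph n m => [set j | (i, j) \notin G].
pose Y := fun G : bgraph n m => [set j | (i', j) \in G].
have vpos : forall k j, 0 < `|v k j| by move=> k j; rewrite normr_gt0 lt_eqF.
have repr : forall G, G \in MWW [set i; i'] v ->
   G = [set e | ((e.1 == i) && (e.2 \notin X G)) || ((e.1 == i') && (e.2 \in Y G))].
  move=> G /inMWW [tau [tp ->]]; apply/setP => [[k j]].
  rewrite [in RHS]inE /= !inE /= negbK.
  case: (eqVneq k i) => [->|ki] /=; first by rewrite eqxx (negbTE ii') /= orbF.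
  case: (eqVneq k i') => [->|ki'] //=; first by rewrite eqxx orbT.
have key : forall G, G \in MWW [set i; i'] v -> exists r,
    X G = [set j | a j < r] /\ Y G = [set j | a j <= r].
  move=> G /inMWW [tau [tp ->]].
  have t1 := tp i (set21 _ _); have t2 := tp i' (set22 _ _).
  exists (tau i / tau i'); split; apply/setP => j; rewrite !inE /= forall_set2 /=.
    by rewrite eqxx lexx /= ltNge /a le_div // [X in _ <= X]mulrC.
  by rewrite eqxx orbT lexx andbT /a le_div // [X in X <= _]mulrC.
pose g := fun G : bgraph n m => (inord (#|X G| + #|Y G|) : 'I_(2 * m).+1).
have bnd : forall G, (#|X G| + #|Y G| < (2 * m).+1)%N.
  move=> G; rewrite ltnS mul2n -addnn; apply: leq_add;
  by apply: leq_trans (max_card _) _; rewrite card_ord.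
have inj : {in MWW [set i; i'] v &, injective g}.
  move=> G1 G2 h1 h2 /(congr1 (@nat_of_ord _)); rewrite /g !inordK ?bnd // => e.
  have [r1 [hx1 hy1]] := key _ h1; have [r2 [hx2 hy2]] := key _ h2.
  have mono : forall r s, r <= s ->
      [set j | a j < r] \subset [set j | a j < s] /\
      [set j | a j <= r] \subset [set j | a j <= s].
    move=> r s rs; split; apply/subsetP => j; rewrite !inE => h.
      exact: lt_le_trans h rs.
    exact: le_trans h rs.
  have [eX eY] : X G1 = X G2 /\ Y G1 = Y G2.
    case/orP: (le_total r1 r2) => hr; have [m1 m2] := mono _ _ hr.
      by apply: sum_sub => //; rewrite ?hx1 ?hx2 ?hy1 ?hy2.
    have [] := @sum_sub _ (X G2) (Y G2) (X G1) (Y G1) _ _ (esym e);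
      by rewrite ?hx1 ?hx2 ?hy1 ?hy2.
  by rewrite (repr _ h1) (repr _ h2) eX eY.
rewrite -(card_in_imset inj); apply: leq_trans (max_card _) _.
by rewrite card_ord.
Qed.

Definition pairT (n : nat) := {A : {set 'I_n} | #|A| == 2}.

Lemma card_pairT n : #|{: pairT n}| = 'C(n, 2).
Proof.
rewrite /pairT card_sig -[in RHS](card_ord n) -card_draws.
by apply: eq_card => A; rewrite !inE.
Qed.

Definition phi (R : realFieldType) (n m : nat) (v : 'M[R]_(n, m))
  (k : {ffun pairT n -> 'I_(2 * m).+1}) : bgraph n m :=
  [set e | [forall i' : 'I_n, (i' != e.1) ==>
     [exists p : pairT n, (val p == [set e.1; i']) &&
        (e \in nth set0 (enum (MWW (val p) v)) (k p))]]].
Arguments phi {R n m}.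

Theorem proposition2 (R : realFieldType) (n m : nat) (v : 'M[R]_(n, m))
  (hn : (2 <= n)%N) (hneg : forall i j, v i j < 0) :
  (#|Gv v| <= (2 * m + 1) ^ (n * (n - 1) %/ 2))%N /\
  MWW [set: 'I_n] v \subset Gv v.
Proof.
split; last exact: MWW_sub.
have sub : Gv v \subset [set phi v k | k in [set: {ffun pairT n -> 'I_(2 * m).+1}]].
  apply/subsetP => G /inGvE [C [hsym [hmww ->]]].
  have n0 : (0 < n)%N by exact: ltnW hn.
  pose i0 : 'I_n := Ordinal n0.
  pose Cs := fun A : {set 'I_n} => C (nth i0 (enum A) 0) (nth i0 (enum A) 1).
  have CsE : forall i i', i != i' -> Cs [set i; i'] = C i i'.
    move=> i i' ii'; rewrite /Cs.
    set A := [set i; i'].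
    have sz : size (enum A) = 2 by rewrite -cardE cards2 ii'.
    have xA : nth i0 (enum A) 0 \in A by rewrite -mem_enum mem_nth // sz.
    have yA : nth i0 (enum A) 1 \in A by rewrite -mem_enum mem_nth // sz.
    have xy : nth i0 (enum A) 0 != nth i0 (enum A) 1.
      by rewrite nth_uniq ?enum_uniq ?sz.
    move: xA yA xy; rewrite !inE.
    move=> /orP[/eqP->|/eqP->] /orP[/eqP->|/eqP->]; rewrite ?eqxx //.
  pose k := [ffun p : pairT n => (inord (index (Cs (val p)) (enum (MWW (val p) v)))
                                  : 'I_(2 * m).+1)].
  apply/imsetP; exists k; first by rewrite inE.
  apply/setP => e; rewrite !inE; apply: eq_forallb => i'.
  case: (eqVneq i' e.1) => [//|ne] /=.
  have ne' : e.1 != i' by rewrite eq_sym.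
  have keyp : forall p : pairT n, val p == [set e.1; i'] ->
      nth set0 (enum (MWW (val p) v)) (k p) = C e.1 i'.
    move=> p /eqP hp; rewrite ffunE hp.
    have mem : Cs [set e.1; i'] \in MWW [set e.1; i'] v by rewrite CsE // hmww.
    rewrite inordK; first by rewrite nth_index ?mem_enum // CsE.
    apply: leq_trans _ ((@card_MWW2 _ _ _ v hneg _ _ ne')).
    by rewrite cardE index_mem mem_enum.
  apply/idP/existsP => [h|[p /andP[hp]]]; last by rewrite keyp.
  have pA : #|[set e.1; i']| == 2 by rewrite cards2 ne'.
  pose q : pairT n := exist (fun A : {set 'I_n} => #|A| == 2) _ pA.
  by exists q; rewrite (keyp q) ?eqxx.
apply: leq_trans (subset_leq_card sub) _.
apply: leq_trans (leq_imset_card _ _) _.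
rewrite cardsT card_ffun card_ord card_pairT bin2 addn1 subn1 divn2.
by [].
Qed.
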